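(* Let $\mathcal{A}=(Q,\Sigma,q_0,\Delta,F,C)$ be a PA of dimension $d$. Then there exists a PA $\mathcal{A}^{IO}$ of dimension $d+1$ such that: the initial state of $\mathcal{A}^{IO}$ is its only accepting state; $L(\mathcal{A})\setminus\{\varepsilon\}=L(\mathcal{A}^{IO})\setminus\{\varepsilon\}$; and the underlying graph of $\mathcal{A}^{IO}$ is strongly connected (its set of states forms a single strongly connected component).
   Context: A semi-linear set in $\mathbb{N}^d$ is a finite union of sets $\{b_0+\sum_{j=1}^\ell b_jz_j\mid z_j\in\mathbb{N}\}$ with $b_j\in\mathbb{N}^d$. A Parikh automaton (PA) of dimension $d$ is $(Q,\Sigma,q_0,\Delta,F,C)$ with finite $Q$, $q_0\in Q$, $F\subseteq Q$, finite $\Delta\subseteq Q\times\Sigma\times\mathbb{N}^d\times Q$, semi-linear $C\subseteq\mathbb{N}^d$. A run on $w=x_1\cdots x_n$ is $r_1\cdots r_n$ with $r_i=(p_{i-1},x_i,\mathbf{v}_i,p_i)\in\Delta$, $p_0=q_0$ (the empty run on $\varepsilon$ if $n=0$); it is accepting if $p_n\in F$ and $\sum_i\mathbf{v}_i\in C$; $L(\mathcal{A})$ is the set of finite words with an accepting run. The underlying graph has vertex set the states and an edge $(p,q)$ iff some transition goes from $p$ to $q$; a strongly connected component is a maximal set of mutually reachable vertices. *)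

(* Defs.v *)
From mathcomp Require Import all_boot.
Set Implicit Arguments. Unset Strict Implicit. Unset Printing Implicit Defensive.

Definition vec (d : nat) := {ffun 'I_d -> nat}.

Definition in_linear (d : nat) (b0 : vec d) (P : seq (vec d)) (v : vec d) : Prop :=
  exists z : seq nat, size z = size P /\
    forall i : 'I_d, v i = b0 i + \sum_(j < size P) (nth b0 P j) i * nth 0 z j.

Definition semilinear (d : nat) (C : vec d -> Prop) : Prop :=
  exists L : seq (vec d * seq (vec d)),
    forall v, C v <-> exists2 bp, bp \in L & in_linear bp.1 bp.2 v.

Record PA (Sigma : finType) (d : nat) := {
  pa_state : finType;
  pa_init : pa_state;
  pa_delta : seq (pa_state * Sigma * vec d * pa_state);
  pa_final : pred pa_state;
  pa_C : vec d -> Prop;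
  pa_C_semilinear : semilinear pa_C
}.

Section PAdefs.
Variables (Sigma : finType) (d : nat) (A : PA Sigma d).

Definition transition := (pa_state A * Sigma * vec d * pa_state A)%type.

Fixpoint is_run (p : pa_state A) (w : seq Sigma) (r : seq transition) : Prop :=
  match w, r with
  | [::], [::] => True
  | x :: w', t :: r' =>
      [/\ t \in pa_delta A, t.1.1.1 = p, t.1.1.2 = x & is_run t.2 w' r']
  | _, _ => False
  end.

Definition run_end (p : pa_state A) (r : seq transition) : pa_state A :=
  last p (map snd r).

Definition run_sum (r : seq transition) : vec d :=
  [ffun i => \sum_(t <- r) t.1.2 i].

Definition in_lang (w : seq Sigma) : Prop :=
  exists r, [/\ is_run (pa_init A) w r,
                @pa_final _ _ A (run_end (pa_init A) r) & pa_C A (run_sum r)].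

Definition pa_edge : rel (pa_state A) :=
  fun p q => has (fun t : transition => (t.1.1.1 == p) && (t.2 == q)) (pa_delta A).

Definition strongly_connected : Prop :=
  forall p q : pa_state A, connect pa_edge p q.

End PAdefs.

(* Main.v *)
Require Import Defs.
From mathcomp Require Import all_boot.
Set Implicit Arguments. Unset Strict Implicit. Unset Printing Implicit Defensive.

Lemma run_sum_cons (Sigma : finType) (d : nat) (A : PA Sigma d)
  (t : transition A) r i : run_sum (t :: r) i = t.1.2 i + run_sum r i.
Proof. by rewrite !ffunE big_cons. Qed.

Lemma run_sum_nil (Sigma : finType) (d : nat) (A : PA Sigma d) i :
  run_sum (A := A) [::] i = 0.
Proof. by rewrite !ffunE big_nil. Qed.

Section Constr.
Variables (Sigma : finType) (d : nat) (A : PA Sigma d).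
Local Notation Q := (pa_state A).
Local Notation q0 := (pa_init A).

Definition ext (v : vec d) (k : nat) : vec d.+1 :=
  [ffun i => if unlift ord_max i is Some j then v j else k].
Definition res (u : vec d.+1) : vec d := [ffun j => u (lift ord_max j)].
Definition zv : vec d := [ffun => 0].

Lemma ext_max v k : ext v k ord_max = k.
Proof. by rewrite ffunE unlift_none. Qed.
Lemma ext_lift v k j : ext v k (lift ord_max j) = v j.
Proof. by rewrite ffunE liftK. Qed.

Definition CB (u : vec d.+1) : Prop := u ord_max = 1 /\ pa_C A (res u).

Lemma CB_semilinear : semilinear CB.
Proof.
case: (pa_C_semilinear A) => L HL.
exists [seq (ext bp.1 1, map (fun v => ext v 0) bp.2) | bp <- L] => u.
split.
- case=> h1 /HL [[b0 P] hin [z [hz hi]]] /=.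
  exists (ext b0 1, map (fun v => ext v 0) P); first by apply/mapP; exists (b0, P).
  exists z; split; first by rewrite size_map.
  move=> i /=; rewrite size_map.
  case: (unliftP ord_max i) => [j ->|->].
  + rewrite ext_lift; move: (hi j); rewrite ffunE => ->; congr (_ + _).
    apply: eq_bigr => k _; rewrite (nth_map b0) ?ltn_ord // ext_lift //.
  + rewrite ext_max h1 big1 // => k _.
    by rewrite (nth_map b0) ?ltn_ord // ext_max.
- case=> bp' /mapP [[b0 P] hin ->] [z [hz hi]] /=.
  move: hz hi; rewrite /= size_map => hz hi.
  split.
  + rewrite hi ext_max big1 // => k _.
    by rewrite (nth_map b0) ?ltn_ord // ext_max.
  + apply/HL; exists (b0, P) => //; exists z; split => // j.
    rewrite ffunE hi ext_lift; congr (_ + _).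
    apply: eq_bigr => k _; rewrite (nth_map b0) ?ltn_ord // ext_lift //.
Qed.

Definition srcs (p : Q) : seq (option Q) :=
  Some p :: (if p == q0 then [:: None] else [::]).

Lemma srcs_uniq s p p' : s \in srcs p -> s \in srcs p' -> p = p'.
Proof.
rewrite /srcs !inE.
case: s => [x|] /=.
  case: (p == q0); case: (p' == q0); rewrite /= ?inE ?orbF;
  by move=> /eqP [->] /eqP [->].
case: eqP => [->|_]; case: eqP => [->|_] //=.
Qed.

Definition tB := (option Q * Sigma * vec d.+1 * option Q)%type.

Definition gen (t : transition A) : seq tB :=
  [seq (s, t.1.1.2, ext t.1.2 0, Some t.2) | s <- srcs t.1.1.1] ++
  (if @pa_final _ _ A t.2 then [seq (s, t.1.1.2, ext t.1.2 1, None) | s <- srcs t.1.1.1]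
   else [::]).

Variable a : Sigma.

Definition junk : seq tB :=
  [seq (s, a, ext zv 2, s') | s <- enum {: option Q}, s' <- enum {: option Q}].

Definition deltaB : seq tB := flatten (map gen (pa_delta A)) ++ junk.

Definition B : PA Sigma d.+1 :=
  {| pa_state := (option Q : finType);
     pa_init := None;
     pa_delta := deltaB;
     pa_final := fun q => q == None;
     pa_C := CB;
     pa_C_semilinear := CB_semilinear |}.

Lemma mem_norm (t : transition A) s : t \in pa_delta A -> s \in srcs t.1.1.1 ->
  (s, t.1.1.2, ext t.1.2 0, Some t.2) \in deltaB.
Proof.
move=> ht hs; rewrite mem_cat; apply/orP; left; apply/flatten_mapP.
by exists t => //; rewrite mem_cat; apply/orP; left; apply/mapP; exists s.
Qed.

Lemma mem_fin (t : transition A) s : t \in pa_delta A -> @pa_final _ _ A t.2 ->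
  s \in srcs t.1.1.1 -> (s, t.1.1.2, ext t.1.2 1, None) \in deltaB.
Proof.
move=> ht hf hs; rewrite mem_cat; apply/orP; left; apply/flatten_mapP.
by exists t => //; rewrite mem_cat hf; apply/orP; right; apply/mapP; exists s.
Qed.

Lemma deltaB_cases (u : tB) : u \in deltaB ->
  [\/ exists2 t : transition A, t \in pa_delta A &
        (u.1.1.1 \in srcs t.1.1.1 /\ u = (u.1.1.1, t.1.1.2, ext t.1.2 0, Some t.2)),
      exists2 t : transition A, t \in pa_delta A &
        [/\ @pa_final _ _ A t.2, u.1.1.1 \in srcs t.1.1.1 &
            u = (u.1.1.1, t.1.1.2, ext t.1.2 1, None)]
    | u.1.2 = ext zv 2].
Proof.
rewrite mem_cat => /orP [/flatten_mapP [t ht]|].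
  rewrite mem_cat => /orP [/mapP [s hs ->]|]; first by constructor 1; exists t.
  case hf: (@pa_final _ _ A t.2); last by rewrite in_nil.
  move=> /mapP [s hs ->]; by constructor 2; exists t.

by case/allpairsP => [[s s'] [_ _ ->]]; constructor 3.
Qed.

Lemma fwd w : forall p (r : seq (transition A)) s, s \in srcs p -> is_run p w r ->
  w != [::] -> @pa_final _ _ A (run_end p r) ->
  exists rB : seq (transition B),
    [/\ is_run (A := B) s w rB, run_end (A := B) s rB = None &
        forall i, run_sum rB i = ext (run_sum r) 1 i].
Proof.
elim: w => [//|x w IH] p [//|t r] s hs /= [ht hp hx hr] _.
rewrite /run_end /= -/(run_end _ _) => hf.
case: w IH hr hf => [|y w] IH hr hf.
  case: r hr hf => // _ hf.
  exists [:: (s, x, ext t.1.2 1, None)]; split => //=.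
    by split => //; rewrite -hx; apply: mem_fin => //; rewrite hp.
  move=> i; rewrite !run_sum_cons !run_sum_nil /= addn0.
  case: (unliftP ord_max i) => [j ->|->]; first by rewrite !ext_lift run_sum_cons run_sum_nil addn0.
  by rewrite !ext_max.
have [rB [h1 h2 h3]] := IH t.2 r (Some t.2) (mem_head _ _) hr isT hf.
exists ((s, x, ext t.1.2 0, Some t.2) :: rB); split => //=.
  by split => //; rewrite -hx; apply: mem_norm => //; rewrite hp.
move=> i; rewrite run_sum_cons h3 /=.
case: (unliftP ord_max i) => [j ->|->]; first by rewrite !ext_lift run_sum_cons.
by rewrite !ext_max.
Qed.

Lemma noret w : forall s (rB : seq (transition B)), is_run (A := B) s w rB ->
  run_sum rB ord_max = 0 -> rB = [::] \/ run_end (A := B) s rB != None.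
Proof.
elim: w => [|x w IH] s [|u rB] //=; try by left.
move=> [hu _ _ hr]; rewrite run_sum_cons => /eqP; rewrite addn_eq0 => /andP [/eqP h0 /eqP h1].
right; rewrite /run_end /= -/(run_end _ _).
case: (IH _ _ hr h1) => [->|//] /=.
case: (deltaB_cases hu) => [[t _ [_ ->]]|[t _ [_ _ hu']]|hu'] //.
- by move: h0; rewrite hu' ext_max.
- by move: h0; rewrite hu' ext_max.
Qed.

Lemma bwd w : forall s p (rB : seq (transition B)), s \in srcs p ->
  is_run (A := B) s w rB -> run_end (A := B) s rB = None -> run_sum rB ord_max = 1 ->
  exists r : seq (transition A), [/\ is_run p w r, @pa_final _ _ A (run_end p r) &
     forall j, run_sum r j = run_sum rB (lift ord_max j)].
Proof.
elim: w => [|x w IH] s p [|u rB] //= hs.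
  by move=> _ _; rewrite run_sum_nil.
move=> [hu hus hux hr]; rewrite /run_end /= -/(run_end _ _) => he.
rewrite run_sum_cons => hsum.
case: (deltaB_cases hu) => [[t ht [hs' hu']]|[t ht [hf hs' hu']]|hu'].
- rewrite hus in hs'; have ep := srcs_uniq hs hs'; subst p.
  rewrite hu' /= ext_max in hsum.
  move: hr he; rewrite hu' /= => hr he.
  have [r [h1 h2 h3]] := IH _ _ _ (mem_head _ _) hr he hsum.
  exists (t :: r); split => //=.
    by split => //; rewrite -hux hu'.
  by move=> j; rewrite !run_sum_cons h3 hu' /= ext_lift.
- rewrite hus in hs'; have ep := srcs_uniq hs hs'; subst p.
  rewrite hu' /= ext_max in hsum.
  have h0 : run_sum rB ord_max = 0 by move: hsum => /eqP; rewrite -{2}(addn0 1) eqn_add2l => /eqP.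
  move: hr he; rewrite hu' /= => hr he.
  case: (noret hr h0) => [ern|]; last by rewrite /run_end he.
  subst rB; case: w IH hr {he} => // IH _.
  exists [:: t]; split => //=.
    by split => //; rewrite -hux hu'.
  by move=> j; rewrite !run_sum_cons !run_sum_nil hu' /= ext_lift.
- by move: hsum; rewrite hu' ext_max.
Qed.

End Constr.

Theorem lemma9 (Sigma : finType) (d : nat) (A : PA Sigma d) :
  exists B : PA Sigma d.+1,
    [/\ (forall q : pa_state B, @pa_final _ _ B q = (q == pa_init B)),
        (forall w : seq Sigma, w != [::] -> (in_lang A w <-> in_lang B w))
      & strongly_connected B].
Proof.
case: (pickP (fun _ : Sigma => true)) => [a _ | h0].
  exists (B A a); split => //.
  - move=> w hw; split.
    + case=> r [hr hf hc].
      have hs : None \in srcs (pa_init A) by rewrite /srcs eqxx !inE.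
      have [rB [h1 h2 h3]] := fwd a hs hr hw hf.
      exists rB; split => //=; first by rewrite h2.
      split; first by rewrite h3 ext_max.
      suff -> : res (run_sum rB) = run_sum r by [].
      by apply/ffunP => j; rewrite ffunE h3 ext_lift.
    + case=> rB [hr /= /eqP hf [hc1 hc2]].
      have hs : None \in srcs (pa_init A) by rewrite /srcs eqxx !inE.
      have [r [h1 h2 h3]] := bwd hs hr hf hc1.
      exists r; split => //.
      suff -> : run_sum r = res (run_sum rB) by [].
      by apply/ffunP => j; rewrite h3 [RHS]ffunE.
  - move=> p q; apply: connect1; apply/hasP.
    exists (p, a, ext (zv d) 2, q); last by rewrite !eqxx.
    rewrite /= mem_cat; apply/orP; right.
    by apply/allpairsP; exists (p, q); rewrite !mem_enum.
have sl : semilinear (fun _ : vec d.+1 => False).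
  by exists [::] => v; split => //; case=> bp; rewrite in_nil.
exists {| pa_state := (unit : finType); pa_init := tt;
          pa_delta := [::]; pa_final := fun _ => true;
          pa_C := fun _ => False; pa_C_semilinear := sl |}.
split => //.
- by case=> // x w _; have := h0 x.
- by move=> [] []; apply: connect0.
Qed.
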